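(* Let $n\geq 2$ and $t$ be positive integers. (i) If $t$ is odd, then any two distinct vertices of $D_{n,t}$ are at distance at least $3$ in $S(K_n,t)$. (ii) If $t$ is even, then any two distinct vertices of $D^*_{n,t}=D_{n,t}\setminus\{1^t\}$ are at distance at least $3$ in $S(K_n,t)$.
   Context: For a positive integer $n$ let $[n]=\{1,\dots,n\}$. For positive integers $n,t$, the Sierpiński graph $S(K_n,t)$ is the simple graph with vertex set $[n]^t$ (words $v_1v_2\cdots v_t$ with $v_i\in[n]$), in which $u_1\cdots u_t$ and $v_1\cdots v_t$ are adjacent if and only if there is $s\in[t]$ with $u_j=v_j$ for all $j<s$, $u_s\neq v_s$, and $u_j=v_s$ and $v_j=u_s$ for all $j>s$. Distance is the length of a shortest path. Write $a^k$ for the word consisting of $k$ copies of the letter $a$. The sets $D_{n,t}\subseteq[n]^t$ are defined recursively: $D_{n,1}=\{1\}$, $D_{n,2}=\{11,21,\dots,n1\}$. For $t\geq 3$ and $\mathbf v=v_1\cdots v_{t-2}\in D_{n,t-2}$ put $E_1(\mathbf v)=\{v_1\cdots v_{t-2}\alpha\alpha:\alpha\in[n]\}$, $E_2(\mathbf v)=\{v_1\cdots v_{t-3}\alpha\beta v_{t-2}:\alpha,\beta\in[n]\setminus\{v_{t-2}\}\}$, and, if $\mathbf v$ is not a constant word, let $\ell$ be the largest index in $[t-3]$ with $v_\ell\neq v_{\ell+1}$ and put $E_3(\mathbf v)=\{v_1\cdots v_{\ell-1}v_{\ell+1}v_\ell^{\,t-\ell-2}\alpha v_\ell:\alpha\in[n]\setminus\{v_\ell\}\}$.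 If $t\geq 3$ is odd, $D_{n,t}=E_1(1^{t-2})\cup E_2(1^{t-2})\cup\bigcup_{\mathbf v\in D_{n,t-2}\setminus\{1^{t-2}\}}\big(E_1(\mathbf v)\cup E_2(\mathbf v)\cup E_3(\mathbf v)\big)$. If $t\geq 4$ is even, $D_{n,t}=\{1^{t-2}\alpha1:\alpha\in[n]\}\cup\bigcup_{\mathbf v\in D_{n,t-2}\setminus\{1^{t-2}\}}\big(E_1(\mathbf v)\cup E_2(\mathbf v)\cup E_3(\mathbf v)\big)$. (In this recursion $1^{t-2}\in D_{n,t-2}$ is the only constant word in $D_{n,t-2}$, so $E_3$ is applied only to non-constant words.) *)

(* Defs.v *)
(* Words over [n] = {1,...,n} are represented as seq nat
   (letters are the naturals 1..n, positions are 0-based in the seq). *)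
From mathcomp Require Import all_boot.
Set Implicit Arguments. Unset Strict Implicit. Unset Printing Implicit Defensive.

Definition is_vertex (n t : nat) (w : seq nat) : bool :=
  (size w == t) && all (fun a => (0 < a) && (a <= n)) w.

Definition sadj (n t : nat) (u v : seq nat) : bool :=
  [&& is_vertex n t u, is_vertex n t v &
   has (fun s =>
          [&& take s u == take s v, nth 0 u s != nth 0 v s &
              all (fun j => (nth 0 u j == nth 0 v s) && (nth 0 v j == nth 0 u s))
                  (iota s.+1 (t - s.+1))])
       (iota 0 t)].

Inductive walk (n t : nat) : nat -> seq nat -> seq nat -> Prop :=
| walk0 u : is_vertex n t u -> walk n t 0 u u
| walkS k u v w : sadj n t u v -> walk n t k v w -> walk n t k.+1 u w.

(* dist_{S(K_n,t)}(u,v) >= d : every walk (hence every shortest path)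
   from u to v has length at least d. *)
Definition dist_ge (n t d : nat) (u v : seq nat) : Prop :=
  forall k, walk n t k u v -> d <= k.

Definition E1 (n : nat) (v : seq nat) : seq (seq nat) :=
  [seq v ++ [:: a; a] | a <- iota 1 n].

Definition E2 (n : nat) (v : seq nat) : seq (seq nat) :=
  let l := last 0 v in
  [seq take (size v).-1 v ++ [:: a; b; l] |
     a <- [seq x <- iota 1 n | x != l], b <- [seq x <- iota 1 n | x != l]].

(* 0-based indices i (i.e. 1-based l = i+1 in [t-3]) with v_l <> v_{l+1} *)
Definition change_pos (v : seq nat) : seq nat :=
  [seq i <- iota 0 (size v).-1 | nth 0 v i != nth 0 v i.+1].

(* E_3(v) = { v_1..v_{l-1} v_{l+1} v_l^{t-l-2} alpha v_l : alpha <> v_l },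
   l the largest index with v_l <> v_{l+1}; empty if v is constant. *)
Definition E3 (n : nat) (v : seq nat) : seq (seq nat) :=
  match change_pos v with
  | [::] => [::]
  | _ :: _ =>
    let i := last 0 (change_pos v) in
    let vl := nth 0 v i in
    [seq take i v ++ [:: nth 0 v i.+1] ++ nseq ((size v) - i.+1) vl ++ [:: a; vl]
       | a <- [seq x <- iota 1 n | x != vl]]
  end.

Definition Estep (n : nat) (v : seq nat) : seq (seq nat) :=
  E1 n v ++ E2 n v ++ E3 n v.

Fixpoint D (n t : nat) : seq (seq nat) :=
  match t with
  | 0 => [::]
  | 1 => [:: [:: 1]]
  | t'.+2 =>
    if t' == 0 then [seq [:: a; 1] | a <- iota 1 n]
    else
      let rest := flatten [seq Estep n v |
                             v <- [seq w <- D n t' | w != nseq t' 1]] in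
      if odd t' (* t odd *) then
        E1 n (nseq t' 1) ++ E2 n (nseq t' 1) ++ rest
      else
        [seq nseq t' 1 ++ [:: a; 1] | a <- iota 1 n] ++ rest
  end.

Definition Dstar (n t : nat) : seq (seq nat) :=
  [seq w <- D n t | w != nseq t 1].

(* Main.v *)
Require Import Defs.
From mathcomp Require Import all_boot.
Set Implicit Arguments. Unset Strict Implicit. Unset Printing Implicit Defensive.

Definition sw (a x : nat) := if x == 0 then a else if x == a then 0 else x.
Definition F (r : seq nat) (x : nat) := foldr sw x r.
Definition phi w := F w 0.

Lemma sw_inv a x : sw a (sw a x) = x.
Proof.
rewrite /sw; repeat (case: eqP => //=); intros; subst; try congruence.
Qed.

Lemma F_cat r s x : F (r ++ s) x = F r (F s x).
Proof. by rewrite /F foldr_cat. Qed.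

Lemma F_inj r : injective (F r).
Proof.
elim: r => [|a r IH] x y //= H.
by apply: IH; rewrite -(sw_inv a (F r x)) H sw_inv.
Qed.

Lemma F_nseq m b x : F (nseq m b) x = if odd m then sw b x else x.
Proof.
elim: m => [|m IH] //.
have -> : F (nseq m.+1 b) x = sw b (F (nseq m b) x) by [].
rewrite IH /=; case: (odd m); rewrite /= ?sw_inv //.
Qed.

Lemma sw0 a : sw a 0 = a. Proof. by []. Qed.
Lemma swaa a : sw a a = 0. Proof. by rewrite /sw eqxx; case: eqP => [->|]. Qed.
Lemma swid a x : x != 0 -> x != a -> sw a x = x.
Proof. by move=> /negPf x0 /negPf xa; rewrite /sw x0 xa. Qed.

Lemma sadj_sym n t u v : sadj n t u v = sadj n t v u.
Proof.
rewrite /sadj andbCA; congr (_ && (_ && _)).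
apply: eq_has => s; rewrite eq_sym (eq_sym (nth 0 u s)); congr (_ && (_ && _)).
by apply: eq_all => j; rewrite andbC.
Qed.

Lemma sadjP n t x y : sadj n t x y -> exists r a b m,
  [/\ a != b, 0 < a, 0 < b, x = r ++ a :: nseq m b & y = r ++ b :: nseq m a].
Proof.
case/and3P => /andP[/eqP sx ax] /andP[/eqP sy ay] /hasP[s].
rewrite mem_iota add0n => st /and3P[/eqP Htk Hne Hall].
have Hall' : forall i, i < t - s.+1 ->
    nth 0 x (s.+1 + i) = nth 0 y s /\ nth 0 y (s.+1 + i) = nth 0 x s.
  move=> i hi.
  have Hm : s.+1 + i \in iota s.+1 (t - s.+1) by rewrite mem_iota leq_addr /= ltn_add2l.
  by have /andP[/eqP -> /eqP ->] := allP Hall _ Hm.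
have pos : forall w, all (fun a => (0 < a) && (a <= n)) w -> size w = t -> 0 < nth 0 w s.
  move=> w aw sw'; have := (all_nthP 0 aw s); rewrite sw' => /(_ st)/andP[]//.
exists (take s x), (nth 0 x s), (nth 0 y s), (t - s.+1); split => //.
- exact: pos.
- exact: pos.
- rewrite -{1}(cat_take_drop s x) (drop_nth 0) ?sx //; congr (_ ++ _ :: _).
  have Hd : all (pred1 (nth 0 y s)) (drop s.+1 x); last by rewrite {1}(all_pred1P _ _ Hd) size_drop sx.
  apply/(all_nthP 0) => i.
  rewrite size_drop sx nth_drop => hi; apply/eqP; exact: (Hall' i hi).1.
- rewrite Htk -{1}(cat_take_drop s y) (drop_nth 0) ?sy //; congr (_ ++ _ :: _).
  have Hd : all (pred1 (nth 0 x s)) (drop s.+1 y); last by rewrite {1}(all_pred1P _ _ Hd) size_drop sy.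
  apply/(all_nthP 0) => i.
  rewrite size_drop sy nth_drop => hi; apply/eqP; exact: (Hall' i hi).2.
Qed.

Lemma rev_dec (r : seq nat) a m b : rev (r ++ a :: nseq m b) = nseq m b ++ a :: rev r.
Proof. by rewrite rev_cat rev_cons rev_nseq cat_rcons. Qed.

Lemma nseq_uniq (b : nat) m m' a a' R R' : a != b -> a' != b ->
  nseq m b ++ a :: R = nseq m' b ++ a' :: R' -> [/\ m = m', a = a' & R = R'].
Proof.
move=> ab a'b; elim: m m' => [|m IH] [|m'] //=.
- by case=> -> ->.
- by case=> E; rewrite E eqxx in ab.
- by case=> E; rewrite -E eqxx in a'b.
by case=> /IH [-> -> ->].
Qed.

Lemma swp a x : 0 < x -> x != a -> sw a x = x.
Proof. by move=> x0; apply: swid; rewrite gtn_eqF. Qed.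

Lemma phi_diff_self r a b m : a != b -> 0 < a -> 0 < b ->
  phi (r ++ a :: nseq m b) != phi (r ++ b :: nseq m a).
Proof.
move=> ab a0 b0; rewrite /phi !F_cat; apply/negP => /eqP /F_inj.
rewrite /= !F_nseq !sw0; case: (odd m).
- by rewrite swp // 1?eq_sym // swp //; apply/eqP; rewrite eq_sym.
- by rewrite !sw0; apply/eqP.
Qed.

Lemma phi_diff_mixed r a' a k c : a' != a -> c != a -> 0 < a -> 0 < a' -> 0 < c ->
  phi (r ++ a' :: nseq k a ++ [:: c]) != phi (r ++ a :: nseq k.+1 a').
Proof.
move=> a'a ca a0 a'0 c0; rewrite /phi !F_cat; apply/negP => /eqP /F_inj.
have -> : F (a' :: nseq k a ++ [:: c]) 0 = sw a' (F (nseq k a) c) by rewrite /= F_cat.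
have -> : F (a :: nseq k.+1 a') 0 = sw a (F (nseq k.+1 a') 0) by [].
rewrite !F_nseq /=; case: (odd k) => /=.
- rewrite sw0 (swp c0 ca) /sw (gtn_eqF c0); case: eqP => [_|ne] E.
    by rewrite E ltnn in a0.
  by rewrite E eqxx in ca.
- rewrite sw0 (swp a'0 a'a) /sw (gtn_eqF c0); case: eqP => [_|ne] E.
    by rewrite E ltnn in a'0.
  exact: ne.
Qed.

Lemma rev_inj (T : Type) : injective (@rev T).
Proof. exact: inv_inj (@revK T). Qed.

Lemma mixed_case n t x y z : sadj n t x y -> sadj n t x z ->
  (exists r a b, [/\ a != b, 0 < a, 0 < b, x = r ++ [:: a] & y = r ++ [:: b]]) ->
  (exists r a b k, [/\ a != b, 0 < a, 0 < b, x = r ++ a :: nseq k.+1 b & z = r ++ b :: nseq k.+1 a]) ->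
  phi y != phi z.
Proof.
move=> _ _ [r [a [b [ab a0 b0 Ex Ey]]]] [r' [a' [b' [k [ab' a0' b0' Ex' Ez]]]]].
have := congr1 rev Ex; rewrite Ex' rev_dec (rev_dec r a 0 b) /= => [[Eb Er]].
subst b'; rewrite -rev_dec in Er; move/rev_inj: Er => Er.
rewrite Ey Ez -Er -catA /=.
apply: phi_diff_mixed => //; by rewrite eq_sym.
Qed.

Lemma nb_inj n t x y z : (y = x \/ sadj n t x y) -> (z = x \/ sadj n t x z) ->
  phi y = phi z -> y = z.
Proof.
case=> [->|Hy]; case=> [->|Hz] //.
- move: Hz => /sadjP [r [a [b [m [ab a0 b0 -> ->]]]]] E.
  by move: (phi_diff_self r m ab a0 b0); rewrite E eqxx.
- move: Hy => /sadjP [r [a [b [m [ab a0 b0 -> ->]]]]] E.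
  by move: (phi_diff_self r m ab a0 b0); rewrite E eqxx.
have [r [a [b [m [ab a0 b0 Ex Ey]]]]] := sadjP Hy.
have [r' [a' [b' [m' [ab' a0' b0' Ex' Ez]]]]] := sadjP Hz.
case: m Ex Ey => [|k] Ex Ey; case: m' Ex' Ez => [|k'] Ex' Ez E.
- have := congr1 rev Ex; rewrite Ex' (rev_dec r a 0 b) (rev_dec r' a' 0 b') /=.
  case=> Ea /rev_inj Er; subst a' r'.
  by move: E; rewrite Ey Ez /phi !F_cat /= => /F_inj; rewrite !sw0 => ->.
- suff: phi y != phi z by rewrite E eqxx.
  apply: (mixed_case Hy Hz).
    by exists r, a, b.
  by exists r', a', b', k'.
- suff: phi z != phi y by rewrite E eqxx.
  apply: (mixed_case Hz Hy).
    by exists r', a', b'.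
  by exists r, a, b, k.
- have := congr1 rev Ex; rewrite Ex' !rev_dec /=; case=> Eb; subst b'.
  move/esym/(nseq_uniq ab ab') => [Ek Ea /rev_inj Er].
  by rewrite Ey Ez Ek Ea Er.
Qed.

Lemma le_last (s : seq nat) x0 : path ltn x0 s -> forall y, y \in x0 :: s -> y <= last x0 s.
Proof.
elim: s x0 => [|z s IH] x0 /=; first by move=> _ y; rewrite inE => /eqP ->.
case/andP=> xz pz y; rewrite inE => /orP[/eqP ->|ys].
  by apply: leq_trans (ltnW xz) _; apply: IH; rewrite ?inE ?eqxx.
exact: IH.
Qed.

Lemma E3_dec (v : seq nat) c cs : change_pos v = c :: cs ->
  let i := last 0 (change_pos v) in
  [/\ i.+1 < size v, nth 0 v i != nth 0 v i.+1 &
      v = take i v ++ nth 0 v i :: nseq (size v - i.+1) (nth 0 v i.+1)].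
Proof.
move=> Hc i.
have memi : i \in change_pos v by rewrite /i Hc /= mem_last.
have srt : sorted ltn (change_pos v).
  by apply: sorted_filter; [exact: ltn_trans | exact: iota_ltn_sorted].
have lei : forall j, j \in change_pos v -> j <= i.
  move=> j; rewrite /i Hc /=; apply: le_last; by rewrite Hc in srt.
move: (memi); rewrite mem_filter mem_iota add0n => /andP[ne lt].
have lt' : i.+1 < size v by move: lt; case: (size v).
have eqj : forall j, i < j -> j.+1 < size v -> nth 0 v j = nth 0 v j.+1.
  move=> j ij js; apply/eqP; apply: contraT => nj.
  have : j \in change_pos v by rewrite mem_filter nj mem_iota add0n /=; move: js; case: (size v).
  by move/lei; rewrite leqNgt ij.
split => //.
rewrite -{1}(cat_take_drop i v) (drop_nth 0) ?(ltnW lt') //; congr (_ ++ _ :: _).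
have Hd : all (pred1 (nth 0 v i.+1)) (drop i.+1 v); last by rewrite {1}(all_pred1P _ _ Hd) size_drop.
apply/(all_nthP 0) => k; rewrite size_drop nth_drop => hk; apply/eqP.
elim: k hk => [|k IH] hk; first by rewrite addn0.
rewrite addnS -eqj; first by apply: IH; apply: ltnW.
  by rewrite addSn ltnS leq_addr.
by rewrite -addnS -ltn_subRL.
Qed.

Definition pos (w : seq nat) := (w != [::]) && all (fun a => 0 < a) w.

Lemma phi_E1 n v w : phi v = 1 -> w \in E1 n v -> phi w = 1.
Proof.
move=> pv /mapP [a _ ->]; rewrite /phi F_cat /=.
by rewrite sw0 swaa.
Qed.

Lemma pos_E1 n v w : pos v -> w \in E1 n v -> pos w.
Proof.
case/andP=> _ av /mapP [a]; rewrite mem_iota => /andP[a1 _] ->.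
by rewrite /pos all_cat av /= a1; case: v av.
Qed.

Lemma phi_E2 n v w : pos v -> phi v = 1 -> w \in E2 n v -> phi w = 1.
Proof.
case/andP=> nv av pv /allpairsP [[a b] /= [ha hb ->]].
move: ha hb; rewrite !mem_filter => /andP[al _] /andP[bl _].
case/lastP: v nv av pv al bl => [//|v' l] _ av pv.
rewrite last_rcons size_rcons /= -cats1 take_size_cat // => al bl.
have l0 : 0 < l by move: av; rewrite all_rcons => /andP[].
move: pv; rewrite /phi -cats1 !F_cat /= sw0 => <-.
by rewrite (swp l0) 1?eq_sym // (swp l0) // eq_sym.
Qed.

Lemma pos_E2 n v w : pos v -> w \in E2 n v -> pos w.
Proof.
case/andP=> nv av /allpairsP [[a b] /= [ha hb ->]].
move: ha hb; rewrite !mem_filter !mem_iota => /andP[_ /andP[a1 _]] /andP[_ /andP[b1 _]].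
case/lastP: v nv av => [//|v' l] _ av.
rewrite last_rcons size_rcons /= -cats1 take_size_cat //.
move: av; rewrite all_rcons => /andP[l0 av'].
by rewrite /pos all_cat av' /= a1 b1 l0; case: v' av'.
Qed.

Lemma phi_E3 n v w : pos v -> phi v = 1 -> w \in E3 n v -> phi w = 1.
Proof.
case/andP=> _ av pv; rewrite /E3.
case Hc: (change_pos v) => [//|c cs].
have [lt ne Ev] := E3_dec Hc; rewrite Hc in lt ne Ev.
set i := last 0 (c :: cs) in lt ne Ev *.
set x := nth 0 v i in ne Ev *; set y := nth 0 v i.+1 in ne Ev *.
have x0 : 0 < x by apply: (all_nthP 0 av); apply: ltnW.
have y0 : 0 < y by apply: (all_nthP 0 av).
case/mapP => a; rewrite mem_filter => /andP[ax _] ->.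
move: pv; rewrite {1}Ev /phi !F_cat /= !F_nseq.
rewrite !sw0 (swp x0) 1?eq_sym //; case: (odd _).
- by rewrite swaa sw0 (swp y0) // eq_sym.
- by rewrite (swp x0).
Qed.

Lemma pos_E3 n v w : pos v -> w \in E3 n v -> pos w.
Proof.
case/andP=> _ av; rewrite /E3.
case Hc: (change_pos v) => [//|c cs].
have [lt ne Ev] := E3_dec Hc; rewrite Hc in lt ne Ev.
set i := last 0 (c :: cs) in lt ne Ev *.
set x := nth 0 v i in ne Ev *; set y := nth 0 v i.+1 in ne Ev *.
have x0 : 0 < x by apply: (all_nthP 0 av); apply: ltnW.
have y0 : 0 < y by apply: (all_nthP 0 av).
case/mapP => a; rewrite mem_filter mem_iota => /andP[_ /andP[a1 _]] ->.
rewrite /pos; apply/andP; split; first by case: (take i v).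
rewrite !all_cat /= a1 x0 y0 /=; apply/andP; split.
  by apply/allP => z /mem_take; apply: (allP av).
by rewrite andbT; apply/allP => z /nseqP[->].
Qed.

Definition Qc n t := forall w, w \in D n t -> pos w /\ (odd t || (w != nseq t 1) -> phi w = 1).

Lemma phi_nseq1 t : phi (nseq t 1) = odd t.
Proof. by rewrite /phi F_nseq; case: (odd t). Qed.

Lemma pos_nseq1 t : 0 < t -> pos (nseq t 1).
Proof. by case: t => // t _; rewrite /pos /=; apply/allP => z /nseqP[->]. Qed.

Lemma rest_ok n t w : Qc n t ->
  w \in flatten [seq Estep n v | v <- [seq x <- D n t | x != nseq t 1]] ->
  pos w /\ phi w = 1.
Proof.
move=> IH /flatten_mapP [v]; rewrite mem_filter => /andP[vn vD].
have [pv phv] := IH v vD; have {phv} phv := phv (introT orP (or_intror vn)).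
rewrite /Estep !mem_cat => /or3P[h|h|h].
- by split; [apply: pos_E1 h | apply: phi_E1 h].
- by split; [apply: pos_E2 h | apply: phi_E2 h].
- by split; [apply: pos_E3 h | apply: phi_E3 h].
Qed.

Lemma D_SS n t : D n t.+3 =
  if odd t.+1 then E1 n (nseq t.+1 1) ++ E2 n (nseq t.+1 1) ++ flatten [seq Estep n v | v <- [seq w <- D n t.+1 | w != nseq t.+1 1]]
  else [seq nseq t.+1 1 ++ [:: a; 1] | a <- iota 1 n] ++ flatten [seq Estep n v | v <- [seq w <- D n t.+1 | w != nseq t.+1 1]].
Proof. by []. Qed.

Lemma oddSS t : odd t.+2 = odd t.
Proof. by rewrite /= negbK. Qed.

Lemma step n t : Qc n t -> Qc n t.+2.
Proof.
move=> IH w; case: t IH => [|t] IH.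
  rewrite /= => /mapP [a]; rewrite mem_iota => /andP[a1 _] ->.
  split; first by rewrite /pos /= a1.
  rewrite /= => ne; rewrite /phi /= swp //; apply: contra ne => /eqP <-; by [].
rewrite D_SS oddSS.
case: ifP => ot; rewrite !mem_cat.
- have p1 := pos_nseq1 (ltn0Sn t).
  case/or3P => [h|h|h]; last by case: (rest_ok IH h) => ? ->.
  + split; first by apply: pos_E1 h.
    by move=> _; apply: phi_E1 h; rewrite phi_nseq1 ot.
  + split; first by apply: pos_E2 h.
    by move=> _; apply: phi_E2 h; rewrite ?phi_nseq1 ?ot.
- case/orP => [h|h]; last by case: (rest_ok IH h) => ? ->.
  move: h => /mapP [a]; rewrite mem_iota => /andP[a1 _] ->.
  split.
    rewrite /pos; apply/andP; split; first by case: (nseq _ _).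
    rewrite all_cat; apply/andP; split; [by apply/allP => z /nseqP[->] | by rewrite /= a1].
  rewrite orFb => ne.
  rewrite /phi F_cat F_nseq ot /= swp //; apply: contra ne => /eqP <-.
  by rewrite -(addn2 t.+1) nseqD.
Qed.

Lemma allQ n t : Qc n t.
Proof.
have base : Qc n 0 /\ Qc n 1.
  split => w //=; rewrite inE => /eqP ->; split => //.
have H : forall t, Qc n t /\ Qc n t.+1.
  elim=> [|s [IH1 IH2]] //; split => //; exact: step.
exact: (H t).1.
Qed.

Lemma walk_short n t k u v : walk n t k u v -> k < 3 -> phi u = phi v -> u = v.
Proof.
case: k => [|[|[|k]]] hk // _ E.
- by inversion hk.
- inversion hk as [|k' a b c Hab Hbc]; subst.
  inversion Hbc; subst.
  by apply: (@nb_inj n t u u v); [left | right | ].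
- inversion hk as [|k' a b c Hab Hbc]; subst.
  inversion Hbc as [|k'' a' b' c' Hab' Hbc']; subst.
  inversion Hbc'; subst.
  by apply: (@nb_inj n t b u v); [right; rewrite sadj_sym | right | ].
Qed.

Theorem lemma2p5 (n t : nat) : 2 <= n -> 0 < t ->
  (odd t -> forall u v, u \in D n t -> v \in D n t -> u != v ->
     dist_ge n t 3 u v) /\
  (~~ odd t -> forall u v, u \in Dstar n t -> v \in Dstar n t -> u != v ->
     dist_ge n t 3 u v).
Proof.
move=> n2 t0; split => ot u v hu hv uv k hk; rewrite leqNgt; apply/negP => k3.
- have [_ pu] := allQ hu; have [_ pv] := allQ hv.
  move/eqP: uv; apply; apply: (walk_short hk k3).
  by rewrite pu ?ot // pv ?ot.
- move: hu hv; rewrite !mem_filter => /andP[un hu] /andP[vn hv].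
  have [_ pu] := allQ hu; have [_ pv] := allQ hv.
  move/eqP: uv; apply; apply: (walk_short hk k3).
  by rewrite pu ?un ?orbT // pv ?vn ?orbT.
Qed.
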